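(* Let $\alpha,\beta,\lambda$ be constants with $\beta\ge 3+2\alpha$ and $0<\lambda<\alpha$. Let $U=[0,1]^2$, $S\subset U$ finite with $(0,0)\in S$, and let $t_i$ be a tile of the tiling of $U$ induced by $S$ (as in the context) that is a $\beta$-tile. Then $$\mathrm{area}(t_i)\le \frac{\beta}{2\lambda e^{\beta-3-2\alpha}}\bigl(\mathrm{area}(A_i)+\mathrm{area}(B_i)\bigr).$$
   Context: Tiling: fix a total order of $S$ in which $p$ precedes $q$ whenever $x(p)+y(p)>x(q)+y(q)$ (ties broken arbitrarily but consistently). Process the points in this order; from the current point cast a ray vertically upward and a ray horizontally rightward, each stopping when it hits the boundary of $U$ or a ray cast from a previously processed point. This partitions $U$ into tiles $t_1,\dots,t_n$, one per point $p_i\in S$: $t_i$ is a simple rectilinear polygon with lower-left corner $p_i$, whose bottom edge $a_i$ and left edge $b_i$ lie on the two rays cast from $p_i$, and whose remaining boundary is a staircase from the top end of $b_i$ to the right end of $a_i$. A concave corner of $t_i$ is a vertex with interior angle $270^\circ$. $t_i$ is a $\beta$-tile if every axis-parallel rectangle contained in $t_i$ has area less than $\frac1\beta\mathrm{area}(t_i)$. The right tip of $t_i$ is the smallest-area region among those of the form ''all points of $t_i$ to the right of a vertical line through a concave corner of $t_i$'' that have area at least $\frac{\alpha}{\beta}\mathrm{area}(t_i)$; the upper tip is defined analogously with horizontal lines through concave corners and points above them. The main body $t_i'$ consists of the points of $t_i$ not in either tip; $a_i'$ and $b_i'$ are its bottom and left edges (segments of $a_i$, $b_i$ starting at $p_i$),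 and $|\cdot|$ denotes length. $A_i$ is the parallelogram with vertices $p_i$, $p_i+(|a_i'|,0)$, $p_i+((1+\lambda)|a_i'|,-\lambda|a_i'|)$, $p_i+(\lambda|a_i'|,-\lambda|a_i'|)$ (base $a_i'$, height $\lambda|a_i'|$, lying below $a_i'$, other sides of slope $-1$). $B_i$ is the parallelogram with vertices $p_i$, $p_i+(0,|b_i'|)$, $p_i+(-\lambda|b_i'|,(1+\lambda)|b_i'|)$, $p_i+(-\lambda|b_i'|,\lambda|b_i'|)$. *)

(* Defs.v *)
From HB Require Import structures.
From mathcomp Require Import all_boot all_order all_algebra.
From mathcomp Require Import all_classical all_reals all_analysis.
Set Implicit Arguments. Unset Strict Implicit. Unset Printing Implicit Defensive.
Import Order.TTheory GRing.Theory Num.Theory.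
Import numFieldNormedType.Exports.
Local Open Scope classical_set_scope.
Local Open Scope ring_scope.

Section Tiling.
Variable R : realType.
Notation pt := (R * R)%type.

(** A processed point together with the top end of its vertical ray and the
    right end of its horizontal ray. *)
Definition ray_entry := (pt * (R * R))%type.

Definition ray_pts (e : ray_entry) : set pt :=
  let: (s, (T, Rt)) := e in
  [set z | (z.1 = s.1 /\ s.2 <= z.2 <= T) \/ (z.2 = s.2 /\ s.1 <= z.1 <= Rt)].

Definition rays_of (done : seq ray_entry) : set pt :=
  [set z | exists2 e, e \in done & ray_pts e z].

Definition ray_top (done : seq ray_entry) (q : pt) : R :=
  inf [set h | q.2 <= h /\ (rays_of done (q.1, h) \/ h = 1)].

Definition ray_right (done : seq ray_entry) (q : pt) : R :=
  inf [set w | q.1 <= w /\ (rays_of done (w, q.2) \/ w = 1)].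

Definition process_step (done : seq ray_entry) (q : pt) : seq ray_entry :=
  rcons done (q, (ray_top done q, ray_right done q)).

Definition all_rays (s : seq pt) : set pt :=
  rays_of (foldl process_step [::] s).

(** The (interior of the) tile with lower-left corner p: points z of the open
    unit square strictly above-right of p such that no ray meets the
    rectangle ]p.1, z.1] x ]p.2, z.2]. *)
Definition tile (s : seq pt) (p : pt) : set pt :=
  [set z | p.1 < z.1 < 1 /\ p.2 < z.2 < 1 /\
     ~ (exists w, all_rays s w /\ p.1 < w.1 <= z.1 /\ p.2 < w.2 <= z.2)].

Definition area (A : set pt) : \bar R :=
  ((@lebesgue_measure R) \x (@lebesgue_measure R))%E A.

Definition beta_tile (beta : R) (t : set pt) : Prop :=
  forall a b c d : R, a < b -> c < d ->
    [set z : pt | a < z.1 < b /\ c < z.2 < d] `<=` t ->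
    (((b - a) * (d - c))%:E < (beta^-1)%:E * area t)%E.

Definition quadrant (c : pt) (e : R) (a b : bool) : set pt :=
  [set z | (if a then c.1 < z.1 < c.1 + e else c.1 - e < z.1 < c.1) /\
           (if b then c.2 < z.2 < c.2 + e else c.2 - e < z.2 < c.2)].

(** Concave corner (interior angle 270 degrees): near c, exactly three of the
    four quadrants lie in t and the fourth is outside t. *)
Definition concave_corner (t : set pt) (c : pt) : Prop :=
  exists e : R, 0 < e /\ exists a0 b0 : bool,
    quadrant c e a0 b0 `&` t = set0 /\
    forall a b : bool, (a, b) != (a0, b0) -> quadrant c e a b `<=` t.

Definition right_region (t : set pt) (c : pt) : set pt := [set z | t z /\ c.1 < z.1].
Definition upper_region (t : set pt) (c : pt) : set pt := [set z | t z /\ c.2 < z.2].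

Definition is_tip (reg : set pt -> pt -> set pt) (alpha beta : R)
    (t : set pt) (X : set pt) : Prop :=
  let ok c := concave_corner t c /\ ((alpha / beta)%:E * area t <= area (reg t c))%E in
  (exists c, ok c /\ X = reg t c /\
     forall c', ok c' -> (area (reg t c) <= area (reg t c'))%E)
  \/ ((forall c, ~ ok c) /\ X = set0).

Definition is_right_tip := is_tip right_region.
Definition is_upper_tip := is_tip upper_region.

Definition seg_length (A : set R) : R := sup A - inf A.

Definition bottom_edge_len (tb : set pt) (p : pt) : R :=
  seg_length [set x | closure tb (x, p.2)].
Definition left_edge_len (tb : set pt) (p : pt) : R :=
  seg_length [set y | closure tb (p.1, y)].

(** area(A_i): parallelogram with base a', height lambda |a'|. *)
Definition par_area (lambda len : R) : R := len * (lambda * len).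

Definition unit_square : set pt := [set z | 0 <= z.1 <= 1 /\ 0 <= z.2 <= 1].

End Tiling.

(* Main.v *)
Require Import Defs.
From HB Require Import structures.
From mathcomp Require Import all_boot all_order all_algebra.
From mathcomp Require Import all_classical all_reals all_analysis.
From mathcomp Require Import ring lra.
Set Implicit Arguments. Unset Strict Implicit. Unset Printing Implicit Defensive.
Import Order.TTheory GRing.Theory Num.Theory.
Import numFieldNormedType.Exports.
Local Open Scope classical_set_scope.
Local Open Scope ring_scope.
Section PartA.
Context {R : realType}.

Lemma lexmax (T : eqType) (f g : T -> R) (s : seq T) : s != [::] ->
  exists2 k, k \in s & forall c, c \in s -> f c < f k \/ (f c = f k /\ g c <= g k).
Proof.
elim: s => [//|x s IH] _.
case: s IH => [|y s] IH.
  exists x; first by rewrite mem_seq1.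
  by move=> c; rewrite mem_seq1 => /eqP ->; right; split.
have [k ks Hk] := IH isT.
case: (ltgtP (f x) (f k)) => [hx|hx|hx].
- exists k; first by rewrite in_cons ks orbT.
  by move=> c; rewrite in_cons => /orP [/eqP ->|cs]; [left|exact: Hk].
- exists x; first by rewrite in_cons eqxx.
  move=> c; rewrite in_cons => /orP [/eqP ->|cs]; first by right; split.
  have [h|[h1 h2]] := Hk c cs; left; [exact: lt_trans hx|by rewrite h1].
- case: (leP (g x) (g k)) => hg.
  + exists k; first by rewrite in_cons ks orbT.
    by move=> c; rewrite in_cons => /orP [/eqP ->|cs]; [right|exact: Hk].
  + exists x; first by rewrite in_cons eqxx.
    move=> c; rewrite in_cons => /orP [/eqP ->|cs]; first by right; split.
    have [h|[h1 h2]] := Hk c cs; first by left; rewrite hx.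
    by right; split; [rewrite h1|exact: (le_trans h2 (ltW hg))].
Qed.

Lemma ln_ge1Vx (x : R) : 0 < x -> 1 - x^-1 <= ln x.
Proof.
move=> x0.
have h : -1 < x^-1 - 1.
  have : 0 < x^-1 by rewrite invr_gt0.
  lra.
have := le_ln1Dx h. rewrite addrC subrK lnV ?posrE // => H.
lra.
Qed.

Definition Phi (M Y u : R) : R :=
  if u <= M / Y then u * Y else M * (1 + ln (u * Y / M)).

Lemma Phi_ge0 M Y u : 0 < M -> 0 < Y -> 0 <= u -> 0 <= Phi M Y u.
Proof.
move=> M0 Y0 u0; rewrite /Phi; case: ifP => h; first exact: mulr_ge0 (ltW Y0).
apply: mulr_ge0; first exact: ltW.
have h' : M / Y < u by rewrite ltNge h.
have : 1 <= u * Y / M.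
  by rewrite ler_pdivlMr // mul1r -ler_pdivrMr // ltW.
move=> /ln_ge0; lra.
Qed.

Lemma Phi_inc M Y a b v : 0 < M -> 0 < Y -> 0 <= a -> a <= b -> 0 <= v -> v <= Y ->
  b * v <= M -> Phi M Y a + (b - a) * v <= Phi M Y b.
Proof.
move=> M0 Y0 a0 ab v0 vY bvM.
have MY0 : 0 < M / Y by rewrite divr_gt0.
rewrite /Phi.
case: (leP b (M / Y)) => hb.
  have ha : a <= M / Y by exact: le_trans hb.
  rewrite ha. nra.
have b0 : 0 < b by exact: lt_trans hb.
have vr : v <= M / b by rewrite ler_pdivlMr // mulrC.
have h1 : (b - a) * v <= (b - a) * (M / b) by apply: ler_wpM2l; lra.
have h2 : (b - a) * (M / b) = M - a * (M / b) by field; exact: lt0r_neq0.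
case: (leP a (M / Y)) => ha.
  set q := M / (b * Y).
  have q0 : 0 < q by rewrite divr_gt0 // mulr_gt0.
  have hq : M / b = q * Y by rewrite /q; field; apply/andP; split; exact: lt0r_neq0.
  have q1 : q < 1.
    by rewrite /q ltr_pdivrMr ?mulr_gt0 // mul1r -ltr_pdivrMr.
  have hL := ln_ge1Vx (_ : 0 < b * Y / M).
  have hbY : 0 < b * Y / M by rewrite divr_gt0 // mulr_gt0.
  have := hL hbY; rewrite invf_div -/q => hL'.
  have h3 : 0 <= (M - a * Y) * (1 - q).
    apply: mulr_ge0; last lra.
    by rewrite subr_ge0 -ler_pdivlMr.
  have h4 : M * (1 - q) <= M * ln (b * Y / M) by apply: ler_wpM2l; lra.
  rewrite hq in h2. nra.
have a0' : 0 < a by exact: lt_trans ha.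
have hdiv : ln (b * Y / M) - ln (a * Y / M) = ln (b / a).
  rewrite -ln_div ?posrE ?divr_gt0 ?mulr_gt0 //.
  congr ln; field; apply/and3P; split; exact: lt0r_neq0.
have hL := ln_ge1Vx (_ : 0 < b / a).
have := hL (divr_gt0 b0 a0'); rewrite invf_div => hL'.
have h5 : M * (1 - a / b) <= M * ln (b / a) by apply: ler_wpM2l; lra.
have h6 : M * (1 - a / b) = M - a * (M / b) by rewrite mulrBr mulr1 mulrCA mulrA.
nra.
Qed.

Lemma Phi_mono M Y a b : 0 < M -> 0 < Y -> 0 <= a -> a <= b -> Phi M Y a <= Phi M Y b.
Proof.
move=> M0 Y0 a0 ab.
have := Phi_inc (v := 0) M0 Y0 a0 ab (lexx _) (ltW Y0).
by rewrite !mulr0 addr0; apply; exact: ltW.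
Qed.

End PartA.
Section PartB.
Context {R : realType}.
Local Notation pt := (R * R)%type.

Definition box (a b c d : R) : set pt := [set z | a <= z.1 <= b /\ c <= z.2 <= d].
Definition rect (p c : pt) : set pt := [set z | p.1 < z.1 < c.1 /\ p.2 < z.2 < c.2].

Record MS := MkMS {
  msN : set pt -> Prop;
  msmu : set pt -> R;
  msNI : forall A B, msN A -> msN B -> msN (A `&` B);
  msNU : forall A B, msN A -> msN B -> msN (A `|` B);
  msNhalf : forall x, msN [set z | x < z.1];
  msNhalf2 : forall y, msN [set z | y < z.2];
  msNbox : forall a b c d, msN (box a b c d);
  msNrect : forall p c, msN (rect p c);
  msmono : forall A B, msN A -> msN B -> A `<=` B -> msmu A <= msmu B;
  msU : forall A B, msN A -> msN B -> msmu (A `|` B) <= msmu A + msmu B;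
  msbox : forall a b c d, a <= b -> c <= d -> msmu (box a b c d) <= (b - a) * (d - c);
  msge0 : forall A, msN A -> 0 <= msmu A }.

Lemma msN0 (m : MS) : msN m set0.
Proof.
have -> : set0 = box 1 0 0 0 :> set pt.
  by apply/seteqP; split => z //= [/andP [h1 h2]]; have := le_trans h1 h2; rewrite ler10.
exact: msNbox.
Qed.

Lemma msmu0 (m : MS) : msmu m set0 = 0.
Proof.
apply/eqP; rewrite eq_le msge0 ?andbT; last exact: msN0.
have h1 : msmu m set0 <= msmu m (box 0 0 0 0).
  apply: msmono; [exact: msN0|exact: msNbox|exact: sub0set].
have h2 := msbox m (lexx (0:R)) (lexx (0:R)).
rewrite subrr mulr0 in h2; exact: le_trans h1 h2.
Qed.

Lemma msmu_empty (m : MS) A : msN m A -> A `<=` set0 -> msmu m A <= 0.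
Proof.
move=> NA sA; rewrite -(msmu0 m); apply: msmono => //; exact: msN0.
Qed.

Definition bigB (p : pt) (Cs : seq pt) : set pt :=
  [set z | exists2 c, c \in Cs & box p.1 (p.1 + c.1) p.2 (p.2 + c.2) z].

Lemma bigB_N (m : MS) p Cs : msN m (bigB p Cs).
Proof.
elim: Cs => [|c Cs IH].
  have -> : bigB p [::] = set0 by apply/seteqP; split => z // [].
  exact: msN0.
have -> : bigB p (c :: Cs) = box p.1 (p.1 + c.1) p.2 (p.2 + c.2) `|` bigB p Cs.
  apply/seteqP; split => z.
    by move=> [c']; rewrite in_cons => /orP [/eqP ->|h] hz; [left|right; exists c'].
  case => [hz|[c' h hz]]; first by exists c => //; rewrite in_cons eqxx.
  by exists c' => //; rewrite in_cons h orbT.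
by apply: msNU => //; exact: msNbox.
Qed.

Lemma hyp_bound (m : MS) p M Y : 0 < M -> 0 < Y ->
  forall n (Cs : seq pt) U0, (size Cs <= n)%N -> 0 <= U0 ->
  (forall c, c \in Cs -> [/\ 0 <= c.1 <= U0, 0 <= c.2 <= Y & c.1 * c.2 <= M]) ->
  msmu m (bigB p Cs) <= Phi M Y U0.
Proof.
move=> M0 Y0; elim => [|n IH] Cs U0 hsz U00 hC.
  case: Cs hsz hC => // _ _.
  have -> : bigB p [::] = set0 by apply/seteqP; split => z // [].
  by rewrite msmu0 Phi_ge0.
case: (eqVneq Cs [::]) => [->|Cne].
  have -> : bigB p [::] = set0 by apply/seteqP; split => z // [].
  by rewrite msmu0 Phi_ge0.
have [k kC hk] := lexmax fst snd Cne.
have [/andP [k10 k1U] /andP [k20 k2Y] kM] := hC k kC.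
set Cs' := [seq c <- Cs | k.2 < c.2].
have hsz' : (size Cs' <= n)%N.
  have : (size Cs' < size Cs)%N.
    rewrite size_filter -(count_predC (fun c => k.2 < c.2) Cs) -addn1 leq_add2l.
    by rewrite -has_count; apply/hasP; exists k => //=; rewrite ltxx.
  move=> h; rewrite -ltnS; exact: leq_trans h hsz.
have hC' : forall c, c \in Cs' -> c \in Cs /\ k.2 < c.2.
  by move=> c; rewrite mem_filter => /andP [h1 h2].
have [u' [u'0 u'k u'C u'z]] : exists u', [/\ 0 <= u', u' <= k.1,
    (forall c, c \in Cs' -> c.1 <= u') &
    (forall z, box p.1 (p.1 + k.1) p.2 (p.2 + k.2) z -> z.1 < p.1 + u' -> bigB p Cs' z)].
  case: (eqVneq Cs' [::]) => [E|Cne'].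
    exists 0; split => //; first by move=> c; rewrite E.
    by move=> z [/andP [h1 _] _]; rewrite addr0 => h; move: (le_lt_trans h1 h); rewrite ltxx.
  have [c' c'C hc'] := lexmax fst snd Cne'.
  have [c'Cs c'k] := hC' c' c'C.
  have [/andP [c'10 _] _ _] := hC c' c'Cs.
  exists c'.1; split => //.
  - have [h|[h1 h2]] := hk c' c'Cs; first exact: ltW.
    by move: (lt_le_trans c'k h2); rewrite ltxx.
  - by move=> c cC; have [h|[h _]] := hc' c cC; [exact: ltW|rewrite h].
  - move=> z [/andP [z1 z1'] /andP [z2 z2']] hz; exists c' => //; split; apply/andP; split => //.
      exact: ltW.
    by apply: (le_trans z2'); rewrite lerD2l ltW.
have sub : bigB p Cs `<=` bigB p Cs' `|` box (p.1 + u') (p.1 + k.1) p.2 (p.2 + k.2).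
  move=> z [c cC hz].
  case: (ltP k.2 c.2) => hkc.
    by left; exists c => //; rewrite mem_filter hkc.
  have hzk : box p.1 (p.1 + k.1) p.2 (p.2 + k.2) z.
    move: hz => [/andP [z1 z1'] /andP [z2 z2']]; split; apply/andP; split => //.
      apply: (le_trans z1'); rewrite lerD2l.
      by have [h|[h _]] := hk c cC; [exact: ltW|rewrite h].
    by apply: (le_trans z2'); rewrite lerD2l.
  case: (ltP z.1 (p.1 + u')) => hz1; first by left; exact: u'z.
  by right; move: hzk => [/andP [_ h] h']; split => //; apply/andP.
apply: (le_trans (msmono (bigB_N m p Cs) (msNU (bigB_N m p Cs') (msNbox m _ _ _ _)) sub)).
apply: (le_trans (msU (bigB_N m p Cs') (msNbox m _ _ _ _))).
have hb := msbox m (a := p.1 + u') (b := p.1 + k.1) (c := p.2) (d := p.2 + k.2).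
rewrite lerD2l lerDl in hb; have {}hb := hb u'k k20.
have hI := IH Cs' u' hsz' u'0.
have {}hI : msmu m (bigB p Cs') <= Phi M Y u'.
  apply: hI => c cC; have [cCs _] := hC' c cC.
  have [/andP [c10 _] h2 h3] := hC c cCs; split => //; apply/andP; split => //; exact: u'C.
have hinc := Phi_inc M0 Y0 u'0 u'k k20 k2Y kM.
have hmono := Phi_mono M0 Y0 k10 k1U.
have e1 : p.1 + k.1 - (p.1 + u') = k.1 - u' by ring.
have e2 : p.2 + k.2 - p.2 = k.2 by ring.
rewrite e1 e2 in hb.
lra.
Qed.

End PartB.
Section PartC.
Context {R : realType}.
Local Notation pt := (R * R)%type.

Lemma pos4 (a b c d : R) : 0 < a -> 0 < b -> 0 < c -> 0 < d ->
  exists e, [/\ 0 < e, e <= a, e <= b, e <= c & e <= d].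
Proof.
move=> a0 b0 c0 d0.
exists (Order.min (Order.min a b) (Order.min c d)).
by rewrite !lt_min a0 b0 c0 d0 !ge_min !lexx ?orbT.
Qed.

Definition reprC (t : set pt) (p : pt) (C : seq pt) :=
  (forall z, t z <-> exists2 c, c \in C & rect p c z) /\
  (forall c, c \in C -> p.1 < c.1 /\ p.2 < c.2).

Lemma reprC_N (m : MS) t p C : reprC t p C -> msN m t.
Proof.
move=> [ht _].
have -> : t = [set z | exists2 c, c \in C & rect p c z].
  by apply/seteqP; split => z /ht.
elim: C {ht} => [|c C IH].
  have -> : [set z | exists2 c, c \in [::] & rect p c z] = set0.
    by apply/seteqP; split => z // [].
  exact: msN0.
have -> : [set z | exists2 c0, c0 \in c :: C & rect p c0 z] =
    rect p c `|` [set z | exists2 c, c \in C & rect p c z].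
  apply/seteqP; split => z.
    by move=> [c']; rewrite in_cons => /orP [/eqP ->|h] hz; [left|right; exists c'].
  case => [hz|[c' h hz]]; first by exists c => //; rewrite in_cons eqxx.
  by exists c' => //; rewrite in_cons h orbT.
by apply: msNU => //; exact: msNrect.
Qed.

Lemma concave_at t p C cs css : reprC t p C -> cs \in C -> css \in C ->
  cs.1 < css.1 -> css.2 < cs.2 ->
  (forall c, c \in C -> cs.1 < c.1 -> c.2 <= css.2) ->
  concave_corner t (cs.1, css.2).
Proof.
move=> [ht hC] csC cssC h1 h2 hmax.
have [cs1 _] := hC cs csC; have [_ css2] := hC css cssC.
have q1 : 0 < cs.1 - p.1 by rewrite subr_gt0.
have q2 : 0 < css.2 - p.2 by rewrite subr_gt0.
have q3 : 0 < cs.2 - css.2 by rewrite subr_gt0.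
have q4 : 0 < css.1 - cs.1 by rewrite subr_gt0.
have [e [e0 ea ey eb ea2]] := pos4 q1 q2 q3 q4.
exists e; split => //; exists true, true; split.
  apply/seteqP; split => z // [[/andP [z1 z1'] /andP [z2 z2']]] /ht [c cC].
  move=> [/andP [_ zc1] /andP [_ zc2]].
  have := hmax c cC (lt_trans z1 zc1); move: z2 zc2 => /=; lra.
case=> [] []; rewrite ?eqxx //= => _ z [/andP [z1 z1'] /andP [z2 z2']]; apply/ht.
- exists css => //; split; apply/andP; split => /=; lra.
- exists cs => //; split; apply/andP; split => /=; lra.
- exists cs => //; split; apply/andP; split => /=; lra.
Qed.

Definition rr (t : set pt) (x : R) : set pt := [set z | t z /\ x < z.1].

Lemma rr_N (m : MS) t x : msN m t -> msN m (rr t x).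
Proof.
move=> Nt; have -> : rr t x = t `&` [set z | x < z.1] by [].
by apply: msNI => //; exact: msNhalf.
Qed.

Lemma tip_bound (m : MS) t p C M alpha (x0 : pt) : reprC t p C ->
  (forall c, c \in C -> (c.1 - p.1) * (c.2 - p.2) < M) -> 0 < alpha -> 0 < M ->
  (forall cc, concave_corner t cc -> alpha * M <= msmu m (rr t cc.1) ->
     msmu m (rr t x0.1) <= msmu m (rr t cc.1)) ->
  msmu m (rr t x0.1) < (alpha + 1) * M.
Proof.
move=> hrep hM a0 M0 hmin.
have Nt := reprC_N m hrep.
have [ht hC] := hrep.
set Rx := fun x => msmu m (rr t x).
have [x1 [P1 P2]] : exists x1, Rx x0.1 <= Rx x1 /\
    (forall c, c \in C -> x1 < c.1 -> (exists y, concave_corner t (c.1, y)) ->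
       Rx c.1 < alpha * M).
  set D := [seq c <- C | `[< x0.1 <= c.1 /\ (exists y, concave_corner t (c.1, y)) /\
                             alpha * M <= Rx c.1 >]].
  case: (eqVneq D [::]) => [DE|Dne].
    exists x0.1; split => // c cC hc hy; rewrite ltNge; apply/negP => hR.
    have : c \in D by rewrite mem_filter cC andbT; apply/asboolP; split => //; exact: ltW.
    by rewrite DE.
  have [d dD hd] := lexmax fst fst Dne.
  move: dD; rewrite mem_filter => /andP [/asboolP [hd0 [[y hy] hdR]] dC].
  exists d.1; split; first exact: (hmin (d.1, y)).
  move=> c cC hc hyc; rewrite ltNge; apply/negP => hR.
  have cD : c \in D.
    rewrite mem_filter cC andbT; apply/asboolP; split => //.
    exact: (le_trans hd0 (ltW hc)).
  have [h|[h _]] := hd c cD; first by move: (lt_trans h hc); rewrite ltxx.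
by move: hc; rewrite h ltxx.
apply: (le_lt_trans P1).
set C1 := [seq c <- C | x1 < c.1].
case: (eqVneq C1 [::]) => [C1E|C1ne].
  have : Rx x1 <= 0.
    apply: msmu_empty; first exact: rr_N.
    move=> z [/ht [c cC [/andP [_ zc] _]] hz].
    have : c \in C1 by rewrite mem_filter cC andbT (lt_trans hz zc).
    by rewrite C1E.
  move=> h; apply: (le_lt_trans h); apply: mulr_gt0 => //; lra.
have [cs csC1 hcs] := lexmax snd fst C1ne.
move: (csC1); rewrite mem_filter => /andP [x1cs csC].
have [cs1 cs2] := hC cs csC.
have sub : rr t x1 `<=` box p.1 cs.1 p.2 cs.2 `|` rr t cs.1.
  move=> z [tz hz]; have := tz; move=> /ht [c cC [/andP [pz1 zc1] /andP [pz2 zc2]]].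
  have cC1 : c \in C1 by rewrite mem_filter cC andbT (lt_trans hz zc1).
  have c2 : c.2 <= cs.2 by have [h|[h _]] := hcs c cC1; [exact: ltW|rewrite h].
  case: (leP z.1 cs.1) => hz1; last by right.
  left; split; apply/andP; split => //; try exact: ltW.
  exact: (le_trans (ltW zc2) c2).
have hbox : msmu m (box p.1 cs.1 p.2 cs.2) < M.
  apply: (le_lt_trans (msbox m (ltW cs1) (ltW cs2))); exact: hM.
have hR2 : Rx cs.1 < alpha * M.
  set C2 := [seq c <- C | cs.1 < c.1].
  case: (eqVneq C2 [::]) => [C2E|C2ne].
    have : Rx cs.1 <= 0.
      apply: msmu_empty; first exact: rr_N.
      move=> z [/ht [c cC [/andP [_ zc] _]] hz].
      have : c \in C2 by rewrite mem_filter cC andbT (lt_trans hz zc).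
      by rewrite C2E.
    move=> h; apply: (le_lt_trans h); exact: mulr_gt0.
  have [css cssC2 hcss] := lexmax snd fst C2ne.
  move: (cssC2); rewrite mem_filter => /andP [cscss cssC].
  have css2 : css.2 < cs.2.
    have cssC1 : css \in C1 by rewrite mem_filter cssC andbT (lt_trans x1cs cscss).
    have [h|[h1 h2]] := hcs css cssC1 => //.
    by move: (lt_le_trans cscss h2); rewrite ltxx.
  apply: (P2 cs csC x1cs); exists css.2.
  apply: (concave_at hrep csC cssC cscss css2).
  move=> c cC hc.
  have cC2 : c \in C2 by rewrite mem_filter cC andbT.
  by have [h|[h _]] := hcss c cC2; [exact: ltW|rewrite h].
have NU : msN m (box p.1 cs.1 p.2 cs.2 `|` rr t cs.1).
  by apply: msNU; [exact: msNbox|exact: rr_N].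
have := msmono (rr_N x1 Nt) NU sub.
have := msU (msNbox m p.1 cs.1 p.2 cs.2) (rr_N cs.1 Nt).
rewrite /Rx in hR2 *. lra.
Qed.

End PartC.
Section PartD.
Context {R : realType}.
Local Notation pt := (R * R)%type.

Lemma area_le (A B : set pt) : measurable A -> measurable B -> A `<=` B -> (area A <= area B)%E.
Proof. move=> mA mB AB. rewrite /area. apply: le_measure => //; rewrite inE //. Qed.

Lemma areaU (A B : set pt) : measurable A -> measurable B -> (area (A `|` B) <= area A + area B)%E.
Proof. move=> mA mB. exact: measureU2. Qed.

Lemma area_ge0 (A : set pt) : (0 <= area A)%E.
Proof. exact: measure_ge0. Qed.

Lemma box_eq (a b c d : R) : box a b c d = `[a, b] `*` `[c, d].
Proof. by apply/seteqP; split=> z /=; rewrite !in_itv /=. Qed.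

Lemma box_meas (a b c d : R) : measurable (box a b c d).
Proof. by rewrite box_eq; apply: measurableX; exact: measurable_itv. Qed.

Lemma area_box (a b c d : R) : a <= b -> c <= d ->
  area (box a b c d) = ((b - a) * (d - c))%:E.
Proof.
move=> ab cd; rewrite box_eq /area product_measure1E; try exact: measurable_itv.
have E (x y : R) : x <= y -> (lebesgue_measure (`[x, y]%classic : set R) = (y - x)%:E)%E.
  move=> xy; rewrite lebesgue_measure_itv /= lte_fin.
  case: ltP => [_|]; first by rewrite EFinD EFinN.
  move=> yx; have -> : y = x by apply/eqP; rewrite eq_le xy yx.
  by rewrite subrr.
transitivity ((b - a)%:E * (d - c)%:E)%E; last by rewrite EFinM.
by congr (_ * _)%E; [exact: E|exact: E].
Qed.

Definition amu (X : set pt) : R := fine (area (X `&` (@unit_square R))).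

Lemma amuE (X : set pt) : measurable X -> area (X `&` (@unit_square R)) = (amu X)%:E.
Proof.
move=> mX; rewrite /amu fineK // ge0_fin_numE ?area_ge0 //.
have mU : measurable (@unit_square R) by exact: (box_meas 0 1 0 1).
apply: (le_lt_trans (area_le (measurableI _ _ mX mU) mU (@subIsetr _ _ _))).
rewrite (area_box ler01 ler01) //; exact: ltry.
Qed.

Lemma amuE' (X : set pt) : measurable X -> X `<=` (@unit_square R) -> area X = (amu X)%:E.
Proof.
move=> mX sX; rewrite -amuE //; congr area; apply/seteqP; split => z.
  by move=> h; split => //; exact: sX.
by case.
Qed.

Definition sw (z : pt) : pt := (z.2, z.1).

Lemma sw_meas (X : set pt) : measurable X -> measurable (sw @^-1` X).
Proof.
move=> mX.
have : measurable_fun setT sw.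
  apply/measurable_fun_pairP; split.
  - exact: measurable_snd.
  - exact: measurable_fst.
move=> /(_ measurableT X mX); by rewrite setTI.
Qed.

Definition areaMS : @MS R.
refine (@MkMS R measurable amu _ _ _ _ _ _ _ _ _ _).
- by move=> A B mA mB; exact: measurableI.
- by move=> A B mA mB; exact: measurableU.
- move=> x; have -> : [set z : pt | x < z.1] = `]x, +oo[ `*` setT.
    by apply/seteqP; split => z /=; rewrite in_itv /= andbT; [move=> h; split|case].
  by apply: measurableX => //; exact: measurable_itv.
- move=> y; have -> : [set z : pt | y < z.2] = setT `*` `]y, +oo[.
    by apply/seteqP; split => z /=; rewrite in_itv /= andbT; [move=> h; split|case].
  by apply: measurableX => //; exact: measurable_itv.
- exact: box_meas.
- move=> p c; have -> : rect p c = `]p.1, c.1[ `*` `]p.2, c.2[.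
    by apply/seteqP; split=> z /=; rewrite !in_itv /=.
  by apply: measurableX; exact: measurable_itv.
- move=> A B mA mB AB; rewrite -lee_fin -!amuE //.
  have mU : measurable (@unit_square R) by exact: (box_meas 0 1 0 1).
  apply: area_le; try exact: measurableI.
  by move=> z [h1 h2]; split => //; exact: AB.
- move=> A B mA mB; rewrite -lee_fin EFinD -!amuE //; try exact: measurableU.
  have mU : measurable (@unit_square R) by exact: (box_meas 0 1 0 1).
  have -> : (A `|` B) `&` (@unit_square R) = (A `&` (@unit_square R)) `|` (B `&` (@unit_square R)).
    by rewrite setIUl.
  by apply: areaU; exact: measurableI.
- move=> a b c d ab cd; rewrite -lee_fin -amuE; last exact: box_meas.
  rewrite -(area_box ab cd); apply: area_le; try exact: box_meas.
    apply: measurableI; exact: box_meas.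
  exact: subIsetl.
- by move=> A mA; rewrite -lee_fin -amuE // area_ge0.
Defined.

Definition swapMS (m : @MS R) : @MS R.
refine (@MkMS R (fun X => msN m (sw @^-1` X)) (fun X => msmu m (sw @^-1` X)) _ _ _ _ _ _ _ _ _ _).
- by move=> A B mA mB; exact: msNI.
- by move=> A B mA mB; exact: msNU.
- by move=> x; exact: (msNhalf2 m x).
- by move=> x; exact: (msNhalf m x).
- move=> a b c d; have -> : sw @^-1` box a b c d = box c d a b by apply/seteqP; split => z [h1 h2]; split.
  exact: msNbox.
- move=> p c; have -> : sw @^-1` rect p c = rect (sw p) (sw c) by apply/seteqP; split => z [h1 h2]; split.
  exact: msNrect.
- move=> A B mA mB AB; apply: msmono => // z; exact: AB.
- by move=> A B mA mB; exact: msU.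
- move=> a b c d ab cd; have -> : sw @^-1` box a b c d = box c d a b by apply/seteqP; split => z [h1 h2]; split.
  by rewrite mulrC; exact: msbox.
- by move=> A mA; exact: msge0.
Defined.

End PartD.
Section PartE.
Context {R : realType}.
Local Notation pt := (R * R)%type.

Lemma minabove (l : seq R) (z1 : R) : z1 < 1 ->
  exists a, [/\ a \in 1 :: l, z1 < a, a <= 1 & forall q, q \in l -> z1 < q -> a <= q].
Proof.
elim: l => [|x l IH] hz.
  by exists 1; split => //; rewrite mem_seq1.
have [a [aA za a1 amin]] := IH hz.
case: (boolP ((z1 < x) && (x < a))) => [/andP [zx xa]|h].
  exists x; split => //; first by rewrite !in_cons eqxx orbT.
    exact: ltW (lt_le_trans xa a1).
  move=> q; rewrite in_cons => /orP [/eqP ->|ql] zq //.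
  exact: le_trans (ltW xa) (amin q ql zq).
exists a; split => //.
  by move: aA; rewrite !in_cons => /orP [->|->]; rewrite ?orbT.
move=> q; rewrite in_cons => /orP [/eqP ->|ql] zq; last exact: amin.
by move: h; rewrite zq /= -leNgt.
Qed.

Lemma tile_repr (s : seq pt) (p : pt) : exists C, reprC (tile s p) p C.
Proof.
set L := foldl (@process_step R) [::] s.
pose cond (e : ray_entry R) : bool := let: (s0, (T, Rt)) := e in
  ((s0.2 <= T) && (p.2 < T) && (p.1 < s0.1)) ||
  ((s0.1 <= Rt) && (p.1 < Rt) && (p.2 < s0.2)).
set Bl := [seq e.1 | e <- L & cond e].
have hB : forall z, p.1 < z.1 -> p.2 < z.2 ->
    (exists w, all_rays s w /\ p.1 < w.1 <= z.1 /\ p.2 < w.2 <= z.2) <->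
    (exists2 q, q \in Bl & q.1 <= z.1 /\ q.2 <= z.2).
  move=> z z1 z2; split.
    move=> [w [[e eL hw] [/andP [w1 w1'] /andP [w2 w2']]]].
    move: e eL hw => [s0 [T Rt]] eL /= [[e1 /andP [h1 h2]]|[e2 /andP [h1 h2]]].
      exists s0.
        apply/mapP; exists (s0, (T, Rt)) => //; rewrite mem_filter eL andbT /=.
        by rewrite (le_trans h1 h2) (lt_le_trans w2 h2) -e1 w1.
      by rewrite -e1; split => //; exact: le_trans h1 w2'.
    exists s0.
      apply/mapP; exists (s0, (T, Rt)) => //; rewrite mem_filter eL andbT /=.
      by rewrite (le_trans h1 h2) (lt_le_trans w1 h2) -e2 w2 orbT.
    by rewrite -e2; split => //; exact: le_trans h1 w1'.
  move=> [q /mapP [[s0 [T Rt]] eF ->] [q1 q2]]; move: eF; rewrite mem_filter.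
  move=> /andP [hc eL]; move: hc => /= /orP [] /andP [/andP [c1 c2] c3].
    exists (s0.1, Order.min T z.2); split.
      exists (s0, (T, Rt)) => //=; left; split => //.
      by rewrite le_min c1 q2 ge_min lexx.
    by rewrite c3 q1 lt_min c2 z2 ge_min lexx orbT.
  exists (Order.min Rt z.1, s0.2); split.
    exists (s0, (T, Rt)) => //=; right; split => //.
    by rewrite le_min c1 q1 ge_min lexx.
  by rewrite c3 q2 lt_min c2 z1 ge_min lexx orbT.
set A := 1 :: [seq q.1 | q <- Bl]; set B := 1 :: [seq q.2 | q <- Bl].
exists [seq c <- [seq (a, b) | a <- A, b <- B] | (p.1 < c.1) && (p.2 < c.2) &&
   (c.1 <= 1) && (c.2 <= 1) && ~~ has (fun q : pt => (q.1 < c.1) && (q.2 < c.2)) Bl].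
split; last first.
  by move=> c; rewrite mem_filter => /andP [/andP [/andP [/andP [/andP [h1 h2] _] _] _] _].
move=> z; split.
  move=> [/andP [z1 z1'] [/andP [z2 z2'] nb]].
  have [a [aA za a1 amin]] := minabove [seq q.1 | q <- Bl] z1'.
  have [b [bB zb b1 bmin]] := minabove [seq q.2 | q <- Bl] z2'.
  exists (a, b); last by split; apply/andP; split.
  rewrite mem_filter; apply/andP; split; last by apply/allpairsP; exists (a, b).
  rewrite /= (lt_trans z1 za) (lt_trans z2 zb) a1 b1 /=.
  apply/hasPn => q qB; apply/negP => /andP [qa qb]; apply: nb; apply/(hB z z1 z2).
  exists q => //; split.
    case: (leP q.1 z.1) => // h; have := amin _ (map_f fst qB) h; rewrite leNgt qa.
    by [].
  case: (leP q.2 z.2) => // h; have := bmin _ (map_f snd qB) h; rewrite leNgt qb.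
  by [].
move=> [c cC [/andP [z1 zc1] /andP [z2 zc2]]].
move: cC; rewrite mem_filter => /andP [/andP [/andP [/andP [/andP [h1 h2] h3] h4] hn] _].
split; first by rewrite z1 (lt_le_trans zc1 h3).
split; first by rewrite z2 (lt_le_trans zc2 h4).
move/(hB z z1 z2) => [q qB [q1 q2]].
by move/hasPn: hn => /(_ q qB); rewrite (le_lt_trans q1 zc1) (le_lt_trans q2 zc2).
Qed.

Lemma swK (z : pt) : sw (sw z) = z :> pt. Proof. by case: z. Qed.

Lemma concave_swap (t : set pt) cc :
  concave_corner (sw @^-1` t) cc -> concave_corner t (sw cc).
Proof.
move=> [e [e0 [a0 [b0 [H1 H2]]]]].
exists e; split => //; exists b0, a0; split.
  apply/seteqP; split => z // [hq tz].
  have : (quadrant cc e a0 b0 `&` (sw @^-1` t)) (sw z).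
    by split; [move: hq => [h1 h2]; split|rewrite /= swK].
  by rewrite H1.
move=> a b hab z hq.
have hba : (b, a) != (a0, b0).
  by apply: contra hab => /eqP [-> ->].
have := H2 b a hba (sw z); rewrite /= swK; apply.
by move: hq => [h1 h2]; split.
Qed.

Lemma reprC_swap (t : set pt) (p : pt) (C : seq pt) : reprC t p C -> reprC (sw @^-1` t) (sw p) (map sw C).
Proof.
move=> [ht hC]; split.
  move=> z; split.
    move=> /ht [c cC [h1 h2]]; exists (sw c); first exact: map_f.
    by split.
  move=> [c' /mapP [c cC ->] [h1 h2]]; apply/ht; exists c => //; by split.
by move=> c' /mapP [c cC ->] /=; have [h1 h2] := hC c cC; split.
Qed.

Lemma rr_sw (t : set pt) y : sw @^-1` (rr (sw @^-1` t) y) = [set z | t z /\ y < z.2].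
Proof. by apply/seteqP; split => -[u v]. Qed.

Lemma concave_gt (t : set pt) (p : pt) (C : seq pt) (c : pt) : reprC t p C -> concave_corner t c -> p.1 < c.1 /\ p.2 < c.2.
Proof.
move=> [ht _] [e [e0 [a0 [b0 [H1 H2]]]]].
have hq : forall a b, (a, b) != (a0, b0) -> exists z, quadrant c e a b z /\ t z.
  move=> a b hab.
  exists ((if a then c.1 + e / 2 else c.1 - e / 2), (if b then c.2 + e / 2 else c.2 - e / 2)).
  have hz : quadrant c e a b ((if a then c.1 + e / 2 else c.1 - e / 2),
                             (if b then c.2 + e / 2 else c.2 - e / 2)).
    rewrite /quadrant /=.
    by case: (a); case: (b) => /=; split; apply/andP; split; lra.
  by split => //; exact: (H2 a b hab _ hz).
have [z [[hz1 _] tz]] := hq false (~~ b0) ltac:(by case: (a0); case: (b0)).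
have [z' [[_ hz2] tz']] := hq (~~ a0) false ltac:(by case: (a0); case: (b0)).
move: tz => /ht [c1 _ [/andP [pz _] _]]; move: tz' => /ht [c2 _ [_ /andP [pz' _]]].
move: hz1 hz2 => /= /andP [h1 h2] /andP [h3 h4].
split; lra.
Qed.

Lemma in_closure (A : set pt) (x : pt) :
  (forall e, 0 < e -> exists z, A z /\ `|x.1 - z.1| < e /\ `|x.2 - z.2| < e) ->
  closure A x.
Proof.
move=> H B /nbhs_ballP [e /= e0 sB].
have [z [Az [h1 h2]]] := H e e0.
exists z; split => //; apply: sB; split; rewrite /ball /=; by [].
Qed.

Lemma closure_bound (A : set pt) (x : pt) (lo1 hi1 lo2 hi2 : R) :
  (forall z, A z -> lo1 <= z.1 <= hi1 /\ lo2 <= z.2 <= hi2) ->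
  closure A x -> lo1 <= x.1 <= hi1 /\ lo2 <= x.2 <= hi2.
Proof.
move=> hA cx.
have key : forall e, 0 < e -> exists z, A z /\ `|x.1 - z.1| < e /\ `|x.2 - z.2| < e.
  move=> e e0; have [z [Az [h1 h2]]] := cx (ball x e) (nbhsx_ballx x e e0).
  by exists z; split => //; move: h2 => [h3 h4]; split.
split; apply/andP; split; rewrite leNgt; apply/negP => h.
- have [z [Az [h1 _]]] := key (lo1 - x.1) ltac:(by rewrite subr_gt0).
  have [/andP [h3 _] _] := hA z Az; move: h1; rewrite ltr_norml; lra.
- have [z [Az [h1 _]]] := key (x.1 - hi1) ltac:(by rewrite subr_gt0).
  have [/andP [_ h3] _] := hA z Az; move: h1; rewrite ltr_norml; lra.
- have [z [Az [_ h1]]] := key (lo2 - x.2) ltac:(by rewrite subr_gt0).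
  have [_ /andP [h3 _]] := hA z Az; move: h1; rewrite ltr_norml; lra.
- have [z [Az [_ h1]]] := key (x.2 - hi2) ltac:(by rewrite subr_gt0).
  have [_ /andP [_ h3]] := hA z Az; move: h1; rewrite ltr_norml; lra.
Qed.

End PartE.
Section PartE2.
Context {R : realType}.

Lemma seg_ge (S : set R) (a X : R) : a < X ->
  (forall x, S x -> 0 <= x <= 1) -> (forall x, a < x < X -> S x) ->
  X - a <= seg_length S.
Proof.
move=> aX hb hin.
have hm : S ((a + X) / 2) by apply: hin; apply/andP; split; lra.
have ne : S !=set0 by exists ((a + X) / 2).
have hs : has_sup S by split => //; exists 1 => x /hb /andP [].
have hi : has_lbound S by exists 0 => x /hb /andP [].
have su := sup_upper_bound hs; have il := ge_inf hi.
have h1 : X <= sup S.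
  rewrite leNgt; apply/negP => h.
  case: (leP (sup S) a) => h2.
    have := su _ hm; lra.
  have hx : a < (sup S + X) / 2 < X by apply/andP; split; lra.
  have := su _ (hin _ hx); lra.
have h2 : inf S <= a.
  rewrite leNgt; apply/negP => h.
  case: (leP X (inf S)) => h3.
    have := il _ hm; lra.
  have hx : a < (a + inf S) / 2 < X by apply/andP; split; lra.
  have := il _ (hin _ hx); lra.
rewrite /seg_length; lra.
Qed.

End PartE2.
Section PartF.
Context {R : realType}.
Local Notation pt := (R * R)%type.

Lemma tipdata (m : @MS R) (t : set pt) p C M alpha X : reprC t p C ->
  (forall c, c \in C -> (c.1 - p.1) * (c.2 - p.2) < M) -> 0 < alpha -> 0 < M ->
  (exists y, concave_corner t (X, y)) -> alpha * M <= msmu m (rr t X) ->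
  (forall c', concave_corner t c' -> alpha * M <= msmu m (rr t c'.1) ->
     msmu m (rr t X) <= msmu m (rr t c'.1)) ->
  [/\ p.1 < X, msmu m (rr t X) < (alpha + 1) * M &
      forall x, x < X -> exists2 c, c \in C & x < c.1].
Proof.
move=> hrep hM a0 M0 [y hy] hok hmin.
have [hX _] := concave_gt hrep hy.
split => //.
  exact: (tip_bound (x0 := (X, y)) hrep hM a0 M0 hmin).
move=> x xX.
case: (pselect (exists z, rr t X z)) => [[z [tz hz]]|nz].
  have [ht _] := hrep; have [c cC [/andP [_ zc] _]] := (ht z).1 tz.
  by exists c => //; apply: lt_trans xX (lt_trans hz zc).
have : msmu m (rr t X) <= 0.
  apply: msmu_empty; first exact: rr_N (reprC_N m hrep).
  by move=> z hz; apply: nz; exists z.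
have : 0 < alpha * M by exact: mulr_gt0.
lra.
Qed.

Lemma notipdata (t : set pt) p C : reprC t p C -> C != [::] ->
  exists X, [/\ p.1 < X, (forall z, t z -> z.1 <= X) &
                forall x, x < X -> exists2 c, c \in C & x < c.1].
Proof.
move=> [ht hC] Cne.
have [k kC hk] := lexmax fst snd Cne.
exists k.1; split.
- by have [] := hC k kC.
- move=> z /ht [c cC [/andP [_ zc] _]]; apply: ltW (lt_le_trans zc _).
  by have [h|[h _]] := hk c cC; [exact: ltW|rewrite h].
- by move=> x xk; exists k.
Qed.

Lemma swsw (t : set pt) : sw @^-1` (sw @^-1` t) = t.
Proof. by apply/seteqP; split => -[u v]. Qed.

End PartF.
Section PartF2.
Context {R : realType}.

Lemma final_ineq (lambda M E U0 Y a b : R) : 0 < lambda -> M * E < U0 * Y ->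
  0 < U0 -> 0 < Y -> U0 <= a -> Y <= b ->
  2 * lambda * (M * E) <= a * (lambda * a) + b * (lambda * b).
Proof.
move=> l0 hME U00 Y0 ha hb.
have h1 : U0 * Y <= a * b by apply: ler_pM; lra.
have s0 : 0 <= (a - b) ^+ 2 := sqr_ge0 _.
have e1 : (a - b) ^+ 2 = a * a + b * b - 2 * (a * b) by rewrite expr2; ring.
rewrite e1 in s0.
have h2 : 2 * (M * E) <= a * a + b * b by lra.
have -> : a * (lambda * a) + b * (lambda * b) = lambda * (a * a + b * b) by ring.
have -> : 2 * lambda * (M * E) = lambda * (2 * (M * E)) by ring.
by apply: ler_wpM2l => //; exact: ltW.
Qed.

Lemma phi_conclude (M Y U0 alpha beta Wm : R) : 0 < M -> 0 < Y -> 0 < U0 ->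
  3 + 2 * alpha <= beta -> beta * M < Wm + 2 * ((alpha + 1) * M) ->
  Wm <= Phi M Y U0 -> M * expR (beta - 3 - 2 * alpha) < U0 * Y.
Proof.
move=> M0 Y0 U00 hb hA; rewrite /Phi; case: ifP => hU hW.
  have : U0 * Y <= M by rewrite -ler_pdivlMr.
  move=> h; exfalso.
  have : beta * M < (3 + 2 * alpha) * M by lra.
  rewrite ltr_pM2r // => h'; lra.
have hq : 0 < U0 * Y / M by rewrite divr_gt0 // mulr_gt0.
have hL : beta - 3 - 2 * alpha < ln (U0 * Y / M).
  have : beta * M < (3 + 2 * alpha + ln (U0 * Y / M)) * M by lra.
  rewrite ltr_pM2r //; lra.
have : expR (beta - 3 - 2 * alpha) < U0 * Y / M.
  by rewrite -[X in _ < X](lnK hq) ltr_expR.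
by rewrite ltr_pdivlMr // mulrC.
Qed.

End PartF2.

Unset Implicit Arguments.

Theorem lemma4 (R : realType) (alpha beta lambda : R)
  (hbeta : 3 + 2 * alpha <= beta) (hlam0 : 0 < lambda) (hlam : lambda < alpha)
  (s : seq (R * R))
  (hs_uniq : uniq s)
  (hs_U : forall q, q \in s -> unit_square q)
  (hs_0 : (0, 0) \in s)
  (hs_order : sorted (fun q r : R * R => r.1 + r.2 <= q.1 + q.2) s)
  (p : R * R) (hp : p \in s)
  (hbt : beta_tile beta (tile s p))
  (RT UT : set (R * R))
  (hRT : is_right_tip alpha beta (tile s p) RT)
  (hUT : is_upper_tip alpha beta (tile s p) UT) :
  let tb := tile s p `\` (RT `|` UT) in
  (area (tile s p) <=
    (beta / (2 * lambda * expR (beta - 3 - 2 * alpha)))%:E *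
    (par_area lambda (bottom_edge_len tb p) + par_area lambda (left_edge_len tb p))%:E)%E.
Proof.
cbv zeta.
set tb := tile s p `\` (RT `|` UT).
have [C hrep] := tile_repr s p.
set t := tile s p in hrep hbt hRT hUT tb *.
have [p1 p2] : 0 <= p.1 /\ 0 <= p.2 by have [/andP [h1 _] /andP [h2 _]] := hs_U p hp.
have tU : t `<=` @unit_square R.
  move=> z [/andP [z1 z1'] [/andP [z2 z2'] _]].
  by split; apply/andP; split; lra.
have mt : measurable t := reprC_N areaMS hrep.
have At : area t = (amu t)%:E := amuE' mt tU.
set A := amu t in At.
have a0 : 0 < alpha by lra.
have b0 : 0 < beta by lra.
set k := beta / (2 * lambda * expR (beta - 3 - 2 * alpha)).
have E0 : 0 < expR (beta - 3 - 2 * alpha) := expR_gt0 _.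
have k0 : 0 < k by rewrite /k divr_gt0 // !mulr_gt0.
set a' := bottom_edge_len tb p; set b' := left_edge_len tb p.
have pa0 : forall x, 0 <= par_area lambda x.
  by move=> x; rewrite /par_area; nra.
rewrite At -EFinM lee_fin.
case: (leP A 0) => hA.
  apply: le_trans hA _; apply: mulr_ge0; first exact: ltW.
  by apply: addr_ge0.

have [ht hC] := hrep.
set M := A / beta.
have M0 : 0 < M by rewrite divr_gt0.
have AM : A = beta * M by rewrite /M; field; exact: lt0r_neq0.
have hM : forall c, c \in C -> (c.1 - p.1) * (c.2 - p.2) < M.
  move=> c cC; have [hc1 hc2] := hC c cC.
  have sub : [set z : R * R | p.1 < z.1 < c.1 /\ p.2 < z.2 < c.2] `<=` t.
    by move=> z hz; apply/ht; exists c.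
  have := hbt p.1 c.1 p.2 c.2 hc1 hc2 sub.
  by rewrite At -EFinM lte_fin /M [A / beta]mulrC.
have Cne : C != [::].
  apply/eqP => CE; move: hA; rewrite /A.
  have -> : t = set0.
    by apply/seteqP; split => z // /ht [c]; rewrite CE.
  have h0 : amu set0 = 0 := msmu0 areaMS.
  by rewrite h0 ltxx.
have mrr : forall x, measurable (rr t x) := fun x => rr_N (m := areaMS) x mt.
have rrU : forall x, rr t x `<=` @unit_square R by move=> x z [tz _]; exact: tU.
have [XR [hX1 mRT hRT1 hRT2 [hRT3 hRT4]]] : exists XR, [/\ p.1 < XR, measurable RT,
    amu RT < (alpha + 1) * M, (forall z, RT z -> XR < z.1) &
    (forall z, t z -> ~ RT z -> z.1 <= XR) /\
    (forall x, x < XR -> exists2 c, c \in C & x < c.1)].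
  move: hRT; rewrite /is_right_tip /is_tip /=.
  case => [[c [[cc cok] [RTe cmin]]]|[nok RTe]].
    have okE : forall c', ((alpha / beta)%:E * area t <= area (right_region t c'))%E <->
                        alpha * M <= amu (rr t c'.1).
      move=> c'; rewrite At (amuE' (mrr c'.1) (rrU c'.1)) -EFinM lee_fin.
      by rewrite /M mulrA mulrAC.
    have hmin : forall c', concave_corner t c' -> alpha * M <= msmu areaMS (rr t c'.1) ->
        msmu areaMS (rr t c.1) <= msmu areaMS (rr t c'.1).
      move=> c' hc' hok; have := cmin c' (conj hc' ((okE c').2 hok)).
      by rewrite !(amuE' (mrr _) (rrU _)) lee_fin.
    have hy : exists y, concave_corner t (c.1, y) by exists c.2; case: c cc {cok RTe cmin okE hmin}.
    have [h1 h2 h3] := tipdata (m := areaMS) hrep hM a0 M0 hy ((okE c).1 cok) hmin.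
    exists c.1; rewrite RTe; split => //.
    - exact: mrr.
    - by move=> z [_ h].
    - by split => // z tz hz; rewrite leNgt; apply/negP => h; apply: hz.
  have [X [h1 h2 h3]] := notipdata (conj ht hC) Cne.
  exists X; rewrite RTe; split => //.
  - have h0 : amu set0 = 0 := msmu0 areaMS.
    by rewrite h0; apply: mulr_gt0 => //; lra.
  - by split => // z tz _; exact: h2.

have mur : forall y, measurable [set z | t z /\ y < z.2].
  by move=> y; apply: (msNI (m := areaMS)) => //; exact: (msNhalf2 areaMS).
have urU : forall y, [set z | t z /\ y < z.2] `<=` @unit_square R by move=> y z [tz _]; exact: tU.
have [YU [hY1 mUT hUT1 hUT2 [hUT3 hUT4]]] : exists YU, [/\ p.2 < YU, measurable UT,
    amu UT < (alpha + 1) * M, (forall z, UT z -> YU < z.2) &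
    (forall z, t z -> ~ UT z -> z.2 <= YU) /\
    (forall y, y < YU -> exists2 c, c \in C & y < c.2)].
  set t' := sw @^-1` t.
  have hrep' : reprC t' (sw p) (map sw C) := reprC_swap hrep.
  have hM' : forall c, c \in map sw C -> (c.1 - (sw p).1) * (c.2 - (sw p).2) < M.
    by move=> c' /mapP [c cC ->] /=; rewrite mulrC; exact: hM.
  have msw : forall y, msmu (swapMS areaMS) (rr t' y) = amu [set z | t z /\ y < z.2].
    by move=> y; rewrite /= rr_sw.
  move: hUT; rewrite /is_upper_tip /is_tip /=.
  case => [[c [[cc cok] [UTe cmin]]]|[nok UTe]].
    have okE : forall c', ((alpha / beta)%:E * area t <= area (upper_region t c'))%E <->
                        alpha * M <= amu [set z | t z /\ c'.2 < z.2].
      move=> c'; rewrite At (amuE' (mur c'.2) (urU c'.2)) -EFinM lee_fin.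
      by rewrite /M mulrA mulrAC.
    have hmin : forall c', concave_corner t' c' ->
        alpha * M <= msmu (swapMS areaMS) (rr t' c'.1) ->
        msmu (swapMS areaMS) (rr t' c.2) <= msmu (swapMS areaMS) (rr t' c'.1).
      move=> c' hc' hok; rewrite !msw; rewrite msw in hok.
      have hc'' := concave_swap hc'.
      have := cmin (sw c') (conj hc'' ((okE (sw c')).2 hok)).
      by rewrite !(amuE' (mur _) (urU _)) lee_fin.
    have hy : exists y, concave_corner t' (c.2, y).
      exists c.1; have := @concave_swap R t' c; rewrite swsw; apply.
      by case: c cc {cok UTe cmin okE hmin}.
    have hok : alpha * M <= msmu (swapMS areaMS) (rr t' c.2) by rewrite msw; exact: (okE c).1.
    have [h1 h2 h3] := tipdata (m := swapMS areaMS) hrep' hM' a0 M0 hy hok hmin.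
    rewrite msw in h2.
    exists c.2; rewrite UTe; split => //.
    - exact: mur.
    - by move=> z [_ h].
    - split => // [z tz hz|y yc]; first by rewrite leNgt; apply/negP => h; apply: hz.
      by have [c' /mapP [c0 c0C ->] hc'] := h3 y yc; exists c0.
  have [X [h1 h2 h3]] := notipdata hrep' (ltac:(by rewrite -size_eq0 size_map size_eq0)).
  exists X; rewrite UTe; split => //.
  - have h0 : amu set0 = 0 := msmu0 areaMS.
    by rewrite h0; apply: mulr_gt0 => //; lra.
  - split => // [z tz _|y yc]; first by apply: (h2 (sw z)); rewrite /t' /= swK.
    by have [c' /mapP [c0 c0C ->] hc'] := h3 y yc; exists c0.

set U0 := XR - p.1; set Y := YU - p.2.
have U00 : 0 < U0 by rewrite /U0 subr_gt0.
have Y0 : 0 < Y by rewrite /Y subr_gt0.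
set Cs := [seq (Order.min c.1 XR - p.1, Order.min c.2 YU - p.2) | c <- C].
have hW := @hyp_bound R areaMS p M Y M0 Y0 (size Cs) Cs U0 (leqnn _) (ltW U00).
have {}hW : amu (bigB p Cs) <= Phi M Y U0.
  apply: hW => c' /mapP [c cC ->] /=.
  have [hc1 hc2] := hC c cC; have hMc := hM c cC.
  have u0 : 0 <= Order.min c.1 XR - p.1 by rewrite subr_ge0 le_min !ltW.
  have v0 : 0 <= Order.min c.2 YU - p.2 by rewrite subr_ge0 le_min !ltW.
  have u1 : Order.min c.1 XR - p.1 <= c.1 - p.1 by rewrite lerD2r ge_min lexx.
  have v1 : Order.min c.2 YU - p.2 <= c.2 - p.2 by rewrite lerD2r ge_min lexx.
  split.
  - by rewrite u0 /U0 lerD2r ge_min lexx orbT.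
  - by rewrite v0 /Y lerD2r ge_min lexx orbT.
  - apply: ltW; apply: le_lt_trans hMc; exact: ler_pM.
have mW : measurable (bigB p Cs) := bigB_N areaMS p Cs.
have cover : t `<=` bigB p Cs `|` RT `|` UT.
  move=> z tz.
  case: (pselect (UT z)) => hu; first by right.
  case: (pselect (RT z)) => hr; first by left; right.
  left; left.
  have [c cC [/andP [z1 zc1] /andP [z2 zc2]]] := (ht z).1 tz.
  exists (Order.min c.1 XR - p.1, Order.min c.2 YU - p.2); first exact: (map_f _ cC).
  have e1 : p.1 + (Order.min c.1 XR - p.1) = Order.min c.1 XR by rewrite addrC subrK.
  have e2 : p.2 + (Order.min c.2 YU - p.2) = Order.min c.2 YU by rewrite addrC subrK.
  rewrite /box /= e1 e2; split; apply/andP; split.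
  - exact: ltW.
  - by rewrite le_min (ltW zc1) hRT3.
  - exact: ltW.
  - by rewrite le_min (ltW zc2) hUT3.
have hAt : A <= amu (bigB p Cs) + amu RT + amu UT.
  have m1 : measurable (bigB p Cs `|` RT) by exact: measurableU.
  have h1 : A <= amu (bigB p Cs `|` RT `|` UT) :=
    msmono (m := areaMS) mt (measurableU _ _ m1 mUT) cover.
  have h2 : amu (bigB p Cs `|` RT `|` UT) <= amu (bigB p Cs `|` RT) + amu UT :=
    msU (m := areaMS) m1 mUT.
  have h3 : amu (bigB p Cs `|` RT) <= amu (bigB p Cs) + amu RT :=
    msU (m := areaMS) mW mRT.
  lra.

set E := expR (beta - 3 - 2 * alpha).
have hUY : M * E < U0 * Y.
  apply: (phi_conclude M0 Y0 U00 hbeta _ hW); lra.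
have tbU : forall z, tb z -> 0 <= z.1 <= 1 /\ 0 <= z.2 <= 1.
  by move=> z [tz _]; exact: tU.
have tbz : forall x y, p.1 < x < XR -> p.2 < y < YU -> (exists2 c, c \in C & x < c.1 /\ y < c.2) -> tb (x, y).
  move=> x y /andP [hx1 hx2] /andP [hy1 hy2] [c cC [hc1 hc2]]; split.
    by apply/ht; exists c => //; split; apply/andP.
  move=> [hr|hu].
    by have := hRT2 _ hr; rewrite /=; lra.
  by have := hUT2 _ hu; rewrite /=; lra.
have ha' : U0 <= a'.
  apply: seg_ge hX1 _ _.
    by move=> x /(closure_bound tbU) [].
  move=> x /andP [hx1 hx2]; apply: in_closure => e e0.
  have [c cC hc] := hRT4 x hx2.
  have [hc1 hc2] := hC c cC.
  have q1 : 0 < c.2 - p.2 by rewrite subr_gt0.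
  have q2 : 0 < YU - p.2 by rewrite subr_gt0.
  have [d [d0 d1 d2 d3 _]] := pos4 e0 q1 q2 ltr01.
  exists (x, p.2 + d / 2); split.
    apply: tbz; first by apply/andP.
      by apply/andP; split; lra.
    by exists c => //; split => //=; lra.
  by rewrite /= subrr normr0 e0 /= opprD addrA subrr add0r normrN gtr0_norm; lra.
have hb' : Y <= b'.
  apply: seg_ge hY1 _ _.
    by move=> y /(closure_bound tbU) [_].
  move=> y /andP [hy1 hy2]; apply: in_closure => e e0.
  have [c cC hc] := hUT4 y hy2.
  have [hc1 hc2] := hC c cC.
  have q1 : 0 < c.1 - p.1 by rewrite subr_gt0.
  have q2 : 0 < XR - p.1 by rewrite subr_gt0.
  have [d [d0 d1 d2 d3 _]] := pos4 e0 q1 q2 ltr01.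
  exists (p.1 + d / 2, y); split.
    apply: tbz; last by exists c => //; split => //=; lra.
      by apply/andP; split; lra.
    by apply/andP.
  by rewrite /= subrr normr0 e0 /= opprD addrA subrr add0r normrN gtr0_norm; lra.
have hq : 2 * lambda * (M * E) <= par_area lambda a' + par_area lambda b'.
  exact: final_ineq hlam0 hUY U00 Y0 ha' hb'.
have hk : k * (2 * lambda * (M * E)) = beta * M.
  rewrite /k /E; field; apply/andP; split; [exact: lt0r_neq0|exact: lt0r_neq0].
rewrite AM -hk; apply: ler_wpM2l => //; exact: ltW.
Qed.
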